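(* Let $N$ and $M$ be large positive parameters, let $\mathcal{X}$ be any subset of $\{1,2,\ldots,10^M\}$, and let $\Delta=\Delta(N)$ be any function with $\Delta\to\infty$. Then for $\pi(N)\bigl(1+O(1/\Delta)\bigr)$ primes $p\le N$ we have $$\#\{x \bmod p \;:\; x\in\mathcal{X}\}=|\mathcal{X}|+O\!\left(\frac{|\mathcal{X}|}{1+\frac{\pi(N)\log M}{M|\mathcal{X}|\Delta}}\right).$$ That is, the number of primes $p\le N$ for which this estimate holds (with an absolute implied constant) is $\pi(N)(1+O(1/\Delta))$.
   Context: $\pi(N)$ denotes the number of primes $p\le N$. $\#\{x \bmod p : x\in\mathcal{X}\}$ is the number of distinct residues modulo $p$ of elements of $\mathcal{X}$. *)

(* Defs.v *)
From Stdlib Require Import Reals.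
From mathcomp Require Import all_boot.

Definition prime_pi (N : nat) : nat := count prime (iota 0 N.+1).

Definition num_residues (p : nat) (X : seq nat) : nat :=
  size (undup (map (fun x => x %% p) X)).

Definition subset_upto (M : nat) (X : seq nat) : bool :=
  uniq X && all (fun x => (1 <= x) && (x <= 10 ^ M)) X.

Local Open Scope R_scope.

Definition err_term (N M : nat) (X : seq nat) (Delta : R) : R :=
  (INR (size X) / (1 + INR (prime_pi N) * ln (INR M) / (INR M * INR (size X) * Delta))).

Definition good_primes (C : R) (N M : nat) (X : seq nat) (Delta : R) : seq nat :=
  [seq p <- iota 0 N.+1 | prime p &
     (if Rle_dec (Rabs (INR (num_residues p X) - INR (size X))) (C * err_term N M X Delta)
      then true else false)].

(* Main.v *)
Require Import Defs.
From Stdlib Require Import Reals Lra Lia.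
From mathcomp Require Import all_boot zify.

Fixpoint colls (p : nat) (X : seq nat) : nat :=
  match X with
  | [::] => 0
  | x :: s => count (fun y => x %% p == y %% p) s + colls p s
  end.

Lemma num_res_le p X : num_residues p X <= size X.
Proof. by rewrite /num_residues (leq_trans (size_undup _)) // size_map. Qed.

Lemma num_res_colls p X : size X <= num_residues p X + colls p X.
Proof.
rewrite /num_residues; elim: X => [|x s IH] //=.
case: ifP => [/mapP [y ys ey]|_] /=.
  have : 0 < count (fun y => x %% p == y %% p) s.
    by rewrite -has_count; apply/hasP; exists y => //; rewrite ey.
  move: IH; case: (count _ _) => // c h _; apply: (leq_ltn_trans h); by rewrite ltn_add2l addSn ltnS leq_addl.
by rewrite addSn ltnS (leq_trans IH) // leq_add2l leq_addl.
Qed.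

Lemma prod_dvd (L : seq nat) d : uniq L -> all prime L -> all (fun p => p %| d) L ->
  \prod_(p <- L) p %| d.
Proof.
elim: L => [|p L IH] /=; first by rewrite big_nil dvd1n.
move=> /andP [pL uL] /andP [pp aL] /andP [pd dL].
rewrite big_cons Gauss_dvd ?pd ?IH //.
elim: L pL aL {IH uL dL} => [|q L IH] /=; first by rewrite big_nil coprimen1.
rewrite inE negb_or => /andP [pq pL] /andP [qp aL].
rewrite big_cons coprimeMr IH // andbT prime_coprime // dvdn_prime2 //.
Qed.

Lemma prod_ge s0 (L : seq nat) : all (fun p => s0 <= p) L -> s0 ^ size L <= \prod_(p <- L) p.
Proof.
elim: L => [|p L IH] /=; first by rewrite big_nil.
move=> /andP [h1 h2]; rewrite big_cons expnS leq_mul // IH //.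
Qed.

Lemma count_small (a : pred nat) n s0 :
  (forall p, a p -> p < s0) -> count a (iota 0 n) <= s0.
Proof.
move=> H; rewrite -size_filter -(size_iota 0 s0) uniq_leq_size //.
  by rewrite filter_uniq ?iota_uniq.
move=> p; rewrite mem_filter => /andP [ap _]; rewrite mem_iota /= add0n H //.
Qed.

Lemma count_split (T : Type) (b a : pred T) s :
  count b s = count (fun x => b x && a x) s + count (fun x => b x && ~~ a x) s.
Proof. elim: s => [|x s IH] //=; rewrite IH; case: (b x); case: (a x) => /=; lia. Qed.

Lemma count_divs N s0 d D : 1 < s0 -> 0 < d -> d <= D ->
  count (fun p => prime p && (p %| d)) (iota 0 N.+1) <= s0 + trunc_log s0 D.
Proof.
move=> s1 d0 dD.
rewrite (count_split _ _ (fun p => p < s0)).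
apply: leq_add.
  apply: count_small => p /andP [] //.
rewrite -size_filter.
set L := filter _ _.
apply: trunc_log_max => //.
apply: (leq_trans _ dD); apply: (leq_trans (prod_ge s0 L _)).
  by apply/allP => p; rewrite mem_filter => /andP [/andP [_]] /=; rewrite -leqNgt.
apply: dvdn_leq => //; apply: prod_dvd.
- by rewrite filter_uniq ?iota_uniq.
- by apply/allP => p; rewrite mem_filter => /andP [/andP [/andP []]].
- by apply/allP => p; rewrite mem_filter => /andP [/andP [/andP []]].
Qed.

Lemma sum_bool_count (r : seq nat) (P Q : pred nat) :
  \sum_(i <- r | P i) (Q i : nat) = count (fun i => P i && Q i) r.
Proof.
elim: r => [|i r IH]; first by rewrite big_nil.
by rewrite big_cons /= IH; case: (P i); case: (Q i).
Qed.

Lemma pair_bound N s0 D x y : 1 < s0 -> x != y -> 1 <= x <= D -> 1 <= y <= D ->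
  \sum_(p <- [seq p <- iota 0 N.+1 | prime p]) (x %% p == y %% p : nat)
   <= s0 + trunc_log s0 D.
Proof.
move=> s1 xy /andP [x1 xD] /andP [y1 yD].
rewrite big_filter sum_bool_count.
case: (leqP y x) => hxy.
  rewrite (eq_count (a2 := fun p => prime p && (p %| x - y))); last first.
    by move=> p /=; rewrite eqn_mod_dvd.
  apply: count_divs => //; last by rewrite (leq_trans (leq_subr _ _)).
  by rewrite subn_gt0 ltn_neqAle eq_sym xy.
rewrite (eq_count (a2 := fun p => prime p && (p %| y - x))); last first.
  by move=> p /=; rewrite eq_sym eqn_mod_dvd // ltnW.
apply: count_divs => //; last by rewrite (leq_trans (leq_subr _ _)).
by rewrite subn_gt0.
Qed.

Lemma sum_colls N s0 D X : 1 < s0 -> uniq X -> all (fun x => (1 <= x) && (x <= D)) X ->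
  \sum_(p <- [seq p <- iota 0 N.+1 | prime p]) colls p X
   <= size X * size X * (s0 + trunc_log s0 D).
Proof.
move=> s1; elim: X => [|x s IH] /=; first by rewrite big1.
move=> /andP [xs us] /andP [hx hs].
rewrite big_split /=.
have H1 : \sum_(p <- [seq p <- iota 0 N.+1 | prime p]) count (fun y => x %% p == y %% p) s
   <= size s * (s0 + trunc_log s0 D).
  elim: s xs hs {IH us} => [|y s IH2] /=; first by rewrite big1.
  rewrite inE negb_or => /andP [xy xs] /andP [hy hs].
  rewrite big_split /= mulSn leq_add //; last exact: IH2.
  exact: pair_bound.
rewrite mulSn mulnS mulnDl.
apply: (leq_trans (leq_add H1 (IH us hs))).
by rewrite [in X in _ <= _ + X]mulnDl leq_addl.
Qed.

Open Scope R_scope.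
Lemma powE a b : Nat.pow a b = (a ^ b)%N.
Proof. elim: b => [|b IH] //=; by rewrite expnS IH. Qed.

Lemma ln_le' x y : 0 < x -> x <= y -> ln x <= ln y.
Proof.
move=> hx [h|->]; [left; exact: ln_increasing | right; reflexivity].
Qed.

Lemma ln_le_sub1 x : 0 < x -> ln x <= x - 1.
Proof.
move=> hx; rewrite -{2}(exp_ln x hx).
have := exp_ineq1_le (ln x); lra.
Qed.

Lemma nat_facts M : (16 <= M)%N ->
  let s0 := Nat.sqrt M in [/\ (4 <= s0)%N, (s0 * s0 <= M)%N, (M < 4 * (s0 * s0))%N & (M < s0 ^ 4)%N].
Proof.
move=> hM s0.
have [h1 h2] := Nat.sqrt_spec' M; rewrite -/s0 in h1 h2.
have h1' : (s0 * s0 <= M)%N by apply/leP.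
have h2' : (M < s0.+1 * s0.+1)%N by apply/ltP.
have h4 : (4 <= s0)%N by nia.
split => //; nia.
Qed.

Lemma W_bound M : (16 <= M)%N ->
  (1 < Nat.sqrt M)%N /\
  INR (Nat.sqrt M + trunc_log (Nat.sqrt M) (10 ^ M)) * ln (INR M) <= 40 * INR M.
Proof.
move=> hM; have [h4 h1 h2 h3] := nat_facts M hM.
set s0 := Nat.sqrt M in h4 h1 h2 h3 *.
have s1 : (1 < s0)%N by apply: leq_trans h4.
split => //.
set tl := trunc_log s0 (10 ^ M).
have htl : (s0 ^ tl <= 10 ^ M)%N by apply: trunc_logP => //; rewrite expn_gt0.
have Rs0 : 4 <= INR s0.
  have : INR 4 <= INR s0 by apply: le_INR; apply/leP.
  rewrite [INR 4]/=; lra.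
have RM : 16 <= INR M.
  have : INR 16 <= INR M by apply: le_INR; apply/leP.
  rewrite [INR 16]/=; lra.
have Rtl : 0 <= INR tl by apply: pos_INR.
have A : INR tl * ln (INR s0) <= INR M * ln 10.
  rewrite -!ln_pow; try lra.
  apply: ln_le'; first by apply: pow_lt; lra.
  rewrite -!pow_INR.
  have -> : 10 = INR 10 by simpl; lra.
  rewrite -pow_INR; apply: le_INR; apply/leP.
  by rewrite !powE.
have B : ln (INR M) <= 4 * ln (INR s0).
  have -> : 4 * ln (INR s0) = ln (INR s0 ^ 4) by rewrite ln_pow; [rewrite [INR 4]/=; lra | lra].
  apply: ln_le'; first lra.
  rewrite -pow_INR; apply: le_INR; apply/leP; rewrite powE; exact: (ltnW h3).
have C : ln 10 <= 9 by have := ln_le_sub1 10; lra.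
have D : ln (INR M) <= 3 * INR s0.
  have : ln (INR M) <= ln (4 * (INR s0 * INR s0)).
    apply: ln_le'; first lra.
    have -> : 4 * (INR s0 * INR s0) = INR (4 * (s0 * s0)) by rewrite !mult_INR; simpl; lra.
    apply: le_INR; apply/leP; exact: ltnW.
  rewrite !ln_mult; try nra.
  have := ln_le_sub1 (R1 + R1); have := ln_le_sub1 (INR s0); lra.
have E : INR s0 * INR s0 <= INR M.
  rewrite -mult_INR; apply: le_INR; apply/leP; exact h1.
have F : 0 < ln (INR s0).
  rewrite -ln_1; apply: ln_increasing; lra.
rewrite plus_INR Rmult_plus_distr_r.
have G : INR tl * ln (INR M) <= 4 * (INR M * ln 10) by nra.
have lnM : 0 <= ln (INR M) by rewrite -ln_1; apply: ln_le'; lra.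
nra.
Qed.
Lemma bad_real (n r c A Mr D : R) : 0 <= r -> r <= n -> n <= r + c -> 0 < Mr -> 0 < D -> 0 <= A ->
  ~ (Rabs (r - n) <= 2 * (n / (1 + A / (Mr * n * D)))) -> n * (Mr * n * D) < c * A.
Proof.
intros hr hrn hc hM hD hA hbad.
rewrite Rabs_minus_sym Rabs_pos_eq in hbad; last lra.
destruct (Req_dec n 0) as [n0|n0].
{ exfalso; apply hbad; subst n; unfold Rdiv; rewrite Rmult_0_l; lra. }
assert (hn : 0 < n) by lra.
set (Q := Mr * n * D) in *.
assert (hQ : 0 < Q) by (unfold Q; apply Rmult_lt_0_compat; [apply Rmult_lt_0_compat|]; lra).
set (t := 1 + A / Q) in *.
assert (ht : 1 <= t) by (unfold t; assert (0 <= A / Q) by (unfold Rdiv; apply Rmult_le_pos; [lra| left; apply Rinv_0_lt_compat; lra]); lra).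
set (u := n / t) in *.
assert (hu : n = u * t) by (unfold u; field; lra).
assert (hA' : A = Q * (t - 1)) by (unfold t; field; lra).
rewrite hA'. rewrite hu in hbad hrn *.
assert (hu0 : 0 < u).
{ destruct (Rlt_le_dec 0 u) as [|hle]; [assumption|]. nra. }
assert (ht2 : 2 < t) by nra.
assert (hc2 : 2 * u < c) by lra.
nra.
Qed.

Lemma sum_real (B : seq nat) (f : nat -> nat) (T A : R) :
  (forall p, p \in B -> T < INR (f p) * A) ->
  INR (size B) * T <= INR (\sum_(p <- B) f p)%N * A.
Proof.
elim: B => [|p B IH] H; first by rewrite big_nil /=; lra.
rewrite big_cons plus_INR [size _]/= S_INR.
have h1 := H p (mem_head _ _).
have h2 := IH (fun q hq => H q (@mem_behead _ (p :: B) q hq)).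
lra.
Qed.

Lemma sum_sub (r : seq nat) (P Q : pred nat) (F : nat -> nat) :
  (\sum_(p <- r | P p && Q p) F p <= \sum_(p <- r | P p) F p)%N.
Proof.
rewrite big_mkcond [X in (_ <= X)%N]big_mkcond; apply: leq_sum => i _.
by case: (P i); case: (Q i).
Qed.

Theorem theorem2 :
  exists (C1 C2 : R) (N0 M0 : nat), 0 < C1 /\ 0 < C2 /\
    forall (N M : nat) (X : seq nat) (Delta : R),
      (N0 <= N)%N -> (M0 <= M)%N -> subset_upto M X -> 1 <= Delta ->
      INR (size (good_primes C1 N M X Delta)) >= INR (prime_pi N) * (1 - C2 / Delta).
Proof.
exists 2, 40, 0%N, 16%N; split; first lra; split; first lra.
move=> N M X Delta _ hM /andP [uX aX] hD.
have [s1 hW] := W_bound M hM.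
set s0 := Nat.sqrt M in s1 hW.
set W := (s0 + trunc_log s0 (10 ^ M))%N in hW.
set E := err_term N M X Delta.
set cond := fun p => if Rle_dec (Rabs (INR (num_residues p X) - INR (size X))) (2 * E) then true else false.
set bad := [seq p <- iota 0 N.+1 | prime p && ~~ cond p].
have hsize : (size (good_primes 2 N M X Delta) + size bad)%N = prime_pi N.
  by rewrite /good_primes /bad !size_filter /prime_pi (count_split _ prime cond).
set nR := INR (size X).
set MR := INR M.
set piR := INR (prime_pi N).
have RM : 16 <= MR.
  have : INR 16 <= INR M by apply: le_INR; apply/leP.
  rewrite [INR 16]/=; rewrite /MR; lra.
have lnM : 0 < ln MR by rewrite -ln_1; apply: ln_increasing; lra.
have pi0 : 0 <= piR by apply: pos_INR.
have n0 : 0 <= nR by apply: pos_INR.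
set A := piR * ln MR.
have A0 : 0 <= A by rewrite /A; nra.
have key : forall p, p \in bad -> nR * (MR * nR * Delta) < INR (colls p X) * A.
  move=> p; rewrite mem_filter => /andP [/andP [_ hc] _].
  move: hc; rewrite /cond; case: Rle_dec => // hbad _.
  apply: (bad_real _ (INR (num_residues p X))) => //.
  - exact: pos_INR.
  - apply: le_INR; apply/leP; exact: num_res_le.
  - rewrite -plus_INR; apply: le_INR; apply/leP; exact: num_res_colls.
  - lra.
  - lra.
have hbD : INR (size bad) * Delta <= 40 * piR.
  case Eb: bad => [|p b]; first by rewrite /=; lra.
  have pb : p \in bad by rewrite Eb mem_head.
  have kp := key p pb.
  have np : 0 < nR.
    case: (Req_dec nR 0) => [h|]; last lra.
    have X0 : X = [::] by apply: size0nil; apply: INR_eq; rewrite -/nR h.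
    move: kp; rewrite h X0 /=; lra.
  rewrite -Eb.
  have S1 := sum_real bad (fun p => colls p X) _ _ key.
  have S2 : (\sum_(p <- bad) colls p X <= size X * size X * W)%N.
    apply: leq_trans (sum_colls N s0 (10 ^ M) X s1 uX aX).
    by rewrite /bad !big_filter sum_sub.
  have S3 : INR (\sum_(p <- bad) colls p X)%N <= nR * nR * INR W.
    by rewrite /nR -!mult_INR; apply: le_INR; apply/leP.
  have S0 : 0 <= INR (\sum_(p <- bad) colls p X)%N by apply: pos_INR.
  have W0 : 0 <= INR W by apply: pos_INR.
  have b0 : 0 <= INR (size bad) by apply: pos_INR.
  have T1 : INR (size bad) * (nR * (MR * nR * Delta)) <= nR * nR * INR W * A.
    apply: (Rle_trans _ _ _ S1); apply: Rmult_le_compat_r => //.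
  have T2 : nR * nR * INR W * A <= nR * nR * (40 * MR) * piR.
    rewrite /A.
    have : INR W * ln MR * piR <= 40 * MR * piR by apply: Rmult_le_compat_r.
    have : 0 <= nR * nR by nra.
    nra.
  have q : 0 < nR * nR * MR by apply: Rmult_lt_0_compat; nra.
  apply: (Rmult_le_reg_r (nR * nR * MR)) => //.
  nra.
have hpi : INR (size (good_primes 2 N M X Delta)) = piR - INR (size bad).
  by rewrite /piR -hsize plus_INR; ring.
rewrite hpi.
have Dp : 0 < Delta by lra.
have : INR (size bad) <= 40 * piR / Delta.
  apply: (Rmult_le_reg_r Delta) => //.
  rewrite /Rdiv Rmult_assoc Rinv_l; lra.
have -> : piR * (1 - 40 / Delta) = piR - 40 * piR / Delta by field; lra.
lra.
Qed.
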